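(* Every simple rule defined on $\mathcal{E}_{\mathcal{SP}}$ satisfies not obvious manipulability (NOM).
   Context: Let $N=\{1,\dots,n\}$ be a finite set of agents. A preference $R_i$ is a continuous complete preorder on $\mathbb{R}_+\cup\{\infty\}$, with strict part $P_i$ and indifference $I_i$. Its peak $p(R_i)$ is the set of its maximal elements; when a singleton, we identify it with its element. $R_i$ is single-peaked if $p(R_i)$ is a singleton and for all $x,x'\in\mathbb{R}_+$, $xP_ix'$ whenever $x'<x\le p(R_i)$ or $p(R_i)\le x<x'$; $\mathcal{SP}$ denotes the set of these. An economy is $(R,\Omega)$ with $R\in\mathcal{SP}^n$, $\Omega>0$; $\mathcal{E}_{\mathcal{SP}}$ is the set of economies. A rule is a map $\varphi:\mathcal{E}_{\mathcal{SP}}\to\mathbb{R}^n_+$ with $\sum_j\varphi_j(R,\Omega)=\Omega$. Own-peak-onliness: $p(R_i')=p(R_i)$ implies $\varphi_i(R,\Omega)=\varphi_i(R_i',R_{-i},\Omega)$. Option set: $O^\varphi(R_i,\Omega)=\{\varphi_i(R_i,R_{-i},\Omega):R_{-i}\in\mathcal{SP}^{n-1}\}$. $R_i'$ is a manipulation of $\varphi$ at $(R_i,\Omega)$ if $\varphi_i(R_i',R_{-i},\Omega)P_i\varphi_i(R_i,R_{-i},\Omega)$ for some $R_{-i}$; an obvious manipulation if moreover for each $x'\in O^\varphi(R_i',\Omega)$ there is $x\in O^\varphi(R_i,\Omega)$ with $x'P_ix$. $\varphi$ is NOM if it admits no obvious manipulation. Simple rules: $z(R,\Omega)=\sum_jp(R_j)-\Omega$.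 Agent $i$ is simple if either $z(R,\Omega)\ge0$ and $p(R_i)<\Omega/n$, or $z(R,\Omega)\le0$ and $p(R_i)>\Omega/n$; $N^+(R,\Omega)$ is the set of simple agents, $N^-(R,\Omega)=N\setminus N^+(R,\Omega)$, and $E(R,\Omega)=\left|\Omega-\left(\sum_{j\in N^+}p(R_j)+|N^-|\frac{\Omega}{n}\right)\right|$. An own-peak-only rule $\varphi$ is simple if for every economy and every $i$: $\varphi_i=p(R_i)$ for $i\in N^+$; $\varphi_i=\frac{\Omega}{n}+\nu_i$ for $i\in N^-$ when $z\ge0$; $\varphi_i=\frac{\Omega}{n}-\nu_i$ for $i\in N^-$ when $z\le0$; with $0\le\nu_i\le|p(R_i)-\frac{\Omega}{n}|$ and $\sum_{j\in N^-}\nu_j=E(R,\Omega)$. *)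

(* Defs.v *)
From HB Require Import structures.
From mathcomp Require Import all_boot all_order all_algebra.
From mathcomp Require Import reals.
Set Implicit Arguments. Unset Strict Implicit. Unset Printing Implicit Defensive.
Import Order.TTheory GRing.Theory Num.Theory.
Local Open Scope ring_scope.

Section Defs.
Variable R : realType.

(* The extended half line R_+ ∪ {∞}: elements Fin x with 0 <= x, and Inf. *)
Inductive ext := Fin of R | Inf.

Definition indom (a : ext) : Prop :=
  match a with Fin x => 0 <= x | Inf => True end.

Definition pref := ext -> ext -> Prop.

Definition strict (Rl : pref) (a b : ext) : Prop := Rl a b /\ ~ Rl b a.

Definition complete_preorder (Rl : pref) : Prop :=
  (forall a b, indom a -> indom b -> Rl a b \/ Rl b a) /\
  (forall a b c, indom a -> indom b -> indom c -> Rl a b -> Rl b c -> Rl a c).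

(* convergence of sequences in [0, ∞] (order topology of the extended half line) *)
Definition conv (u : nat -> ext) (a : ext) : Prop :=
  match a with
  | Fin l => forall e : R, 0 < e -> exists N : nat, forall k : nat, (N <= k)%N ->
               exists x : R, u k = Fin x /\ `|x - l| < e
  | Inf => forall M : R, exists N : nat, forall k : nat, (N <= k)%N ->
               match u k with Fin x => is_true (M < x) | Inf => True end
  end.

(* continuity: upper and lower contour sets are (sequentially) closed in [0, ∞] *)
Definition pref_continuous (Rl : pref) : Prop :=
  forall (a b : ext) (u : nat -> ext), indom a -> indom b ->
    (forall k, indom (u k)) -> conv u b ->
    ((forall k, Rl (u k) a) -> Rl b a) /\ ((forall k, Rl a (u k)) -> Rl a b).

Definition is_max (Rl : pref) (a : ext) : Prop :=
  indom a /\ ~ (exists b, indom b /\ strict Rl b a).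

Definition has_peak (Rl : pref) (p : R) : Prop :=
  forall a, is_max Rl a <-> a = Fin p.

Definition single_peaked (Rl : pref) : Prop :=
  complete_preorder Rl /\ pref_continuous Rl /\
  exists p : R, has_peak Rl p /\
    forall x x' : R, 0 <= x -> 0 <= x' ->
      ((x' < x <= p) \/ (p <= x < x')) -> strict Rl (Fin x) (Fin x').

End Defs.

Arguments Fin {R}.
Arguments Inf {R}.

Definition profile (R : realType) (n : nat) := 'I_n -> pref R.

Definition economy (R : realType) (n : nat) (Rp : profile R n) (Om : R) : Prop :=
  (forall j, single_peaked (Rp j)) /\ 0 < Om.

Definition upd (R : realType) (n : nat) (Rp : profile R n) (i : 'I_n) (Ri : pref R)
  : profile R n := fun j => if j == i then Ri else Rp j.

Definition rule_map (R : realType) (n : nat) := profile R n -> R -> 'I_n -> R.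

Definition is_rule (R : realType) (n : nat) (phi : rule_map R n) : Prop :=
  forall Rp Om, economy Rp Om ->
    (forall i, 0 <= phi Rp Om i) /\ \sum_(j < n) phi Rp Om j = Om.

Definition own_peak_only (R : realType) (n : nat) (phi : rule_map R n) : Prop :=
  forall Rp Om (i : 'I_n) (Ri' : pref R) (p : R),
    economy Rp Om -> single_peaked Ri' ->
    has_peak (Rp i) p -> has_peak Ri' p ->
    phi Rp Om i = phi (upd Rp i Ri') Om i.

Definition in_option_set (R : realType) (n : nat) (phi : rule_map R n) (i : 'I_n)
  (Ri : pref R) (Om : R) (x : R) : Prop :=
  exists Rp : profile R n, (forall j, j != i -> single_peaked (Rp j)) /\
    x = phi (upd Rp i Ri) Om i.

Definition manipulation (R : realType) (n : nat) (phi : rule_map R n) (i : 'I_n)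
  (Ri Ri' : pref R) (Om : R) : Prop :=
  exists Rp : profile R n, (forall j, j != i -> single_peaked (Rp j)) /\
    strict Ri (Fin (phi (upd Rp i Ri') Om i)) (Fin (phi (upd Rp i Ri) Om i)).

Definition obvious_manipulation (R : realType) (n : nat) (phi : rule_map R n)
  (i : 'I_n) (Ri Ri' : pref R) (Om : R) : Prop :=
  manipulation phi i Ri Ri' Om /\
  forall x', in_option_set phi i Ri' Om x' ->
    exists x, in_option_set phi i Ri Om x /\ strict Ri (Fin x') (Fin x).

Definition NOM (R : realType) (n : nat) (phi : rule_map R n) : Prop :=
  forall (i : 'I_n) (Ri Ri' : pref R) (Om : R),
    single_peaked Ri -> single_peaked Ri' -> 0 < Om ->
    ~ obvious_manipulation phi i Ri Ri' Om.

Definition excess (R : realType) (n : nat) (p : 'I_n -> R) (Om : R) : R :=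
  \sum_(j < n) p j - Om.

Definition simple_agent (R : realType) (n : nat) (p : 'I_n -> R) (Om : R)
  (i : 'I_n) : bool :=
  ((0 <= excess p Om) && (p i < Om / n%:R)) ||
  ((excess p Om <= 0) && (Om / n%:R < p i)).

Definition E_val (R : realType) (n : nat) (p : 'I_n -> R) (Om : R) : R :=
  `| Om - (\sum_(j < n | simple_agent p Om j) p j
           + #|[pred j | ~~ simple_agent p Om j]|%:R * (Om / n%:R)) |.

Definition simple_rule (R : realType) (n : nat) (phi : rule_map R n) : Prop :=
  own_peak_only phi /\
  forall (Rp : profile R n) (Om : R) (p : 'I_n -> R),
    economy Rp Om -> (forall j, has_peak (Rp j) (p j)) ->
    exists nu : 'I_n -> R,
      (forall i, simple_agent p Om i -> phi Rp Om i = p i) /\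
      (0 <= excess p Om -> forall i, ~~ simple_agent p Om i ->
         phi Rp Om i = Om / n%:R + nu i) /\
      (excess p Om <= 0 -> forall i, ~~ simple_agent p Om i ->
         phi Rp Om i = Om / n%:R - nu i) /\
      (forall i, ~~ simple_agent p Om i -> 0 <= nu i <= `|p i - Om / n%:R|) /\
      \sum_(j < n | ~~ simple_agent p Om j) nu j = E_val p Om.

(* Main.v *)
Require Import Defs.
From mathcomp Require Import all_boot all_order all_algebra.
From mathcomp Require Import reals.
From mathcomp Require Import ring lra.
From Stdlib Require Import ClassicalEpsilon.
Set Implicit Arguments. Unset Strict Implicit. Unset Printing Implicit Defensive.
Import Order.TTheory GRing.Theory Num.Theory.
Local Open Scope ring_scope.

Definition Rc (R : realType) (c : R) : pref R := fun a b =>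
  match a, b with
  | Fin x, Fin y => `|x - c| <= `|y - c|
  | Fin _, Inf => True
  | Inf, Fin _ => False
  | Inf, Inf => True
  end.

Lemma tri (R : realType) (x l c : R) : `|l - c| <= `|x - l| + `|x - c|.
Proof.
have -> : l - c = (l - x) + (x - c) by ring.
by apply: le_trans (ler_normD _ _) _; rewrite distrC.
Qed.

Lemma tri2 (R : realType) (x l c : R) : `|x - c| <= `|x - l| + `|l - c|.
Proof.
have -> : x - c = (x - l) + (l - c) by ring.
exact: ler_normD.
Qed.

Lemma Rc_peak (R : realType) (c : R) : 0 <= c -> has_peak (Rc c) c.
Proof.
move=> c0.
move=> [x|]; split.
  * move=> [hx hn]; apply/congr1/eqP; apply/negPn/negP => hne.
    apply: hn; exists (Fin c); split => //=; rewrite /strict /= subrr normr0 normr_ge0.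
    split => //. by rewrite normr_le0 subr_eq0; apply/negP.
  * case=> ->; split => //= -[[y|] [hy []]] //=; rewrite /= subrr normr0 => _ []; exact: normr_ge0.

  * move=> [_ hn]; exfalso; apply: hn; exists (Fin c); split => //; split => //.
  * by [].
Qed.

Lemma Rc_sp (R : realType) (c : R) : 0 <= c -> single_peaked (Rc c).
Proof.
move=> c0; split; [split|split].
- by move=> [x|] [y|] _ _ /=; auto; case: (lerP `|x - c| `|y - c|) => h; [left|right; apply: ltW].
- move=> [x|] [y|] [z|] _ _ _ //=. exact: le_trans.
- move=> a b u ha hb hu hc; split.
  + case: b hc hb => [l|] /= hc hb.
    * case: a ha => [y|] //= ha H.
      rewrite leNgt; apply/negP => hlt.
      have [N HN] := hc (`|l - c| - `|y - c|) ltac:(lra).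
      have [x [ex hx]] := HN N (leqnn N).
      have := H N; rewrite ex /= => hxy.
      have := tri x l c; lra.
    * case: a ha => [y|] //= ha H.
      have [N HN] := hc (c + `|y - c|).
      have := HN N (leqnn N); have := H N.
      case: (u N) => [x|] //= hxy hM.
      have : x - c <= `|x - c| by apply: ler_norm.
      lra.
  + case: b hc hb => [l|] /= hc hb; last by case: a ha.
    case: a ha => [y|] //= ha H.
    * rewrite leNgt; apply/negP => hlt.
      have [N HN] := hc (`|y - c| - `|l - c|) ltac:(lra).
      have [x [ex hx]] := HN N (leqnn N).
      have := H N; rewrite ex /= => hxy.
      have := tri2 x l c; lra.
    * have [N HN] := hc 1 ltac:(lra).
      have [x [ex hx]] := HN N (leqnn N).
      by have := H N; rewrite ex.
- exists c; split; first exact: Rc_peak.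
  + move=> x x' hx hx' H; rewrite /strict /=.
    suff hlt : `|x - c| < `|x' - c| by split; [apply: ltW|rewrite leNgt hlt].
    case: H => /andP [h1 h2].
    * rewrite (ler0_norm (x:=x - c)) ?(ltr0_norm (x:=x'-c)); lra.
    * rewrite (ger0_norm (x:=x - c)) ?(gtr0_norm (x:=x'-c)); lra.
Qed.

Lemma peak_uniq (R : realType) (Rl : pref R) p q :
  has_peak Rl p -> has_peak Rl q -> p = q.
Proof. by move=> hp hq; have /hq [] : is_max Rl (Fin p) by apply/hp. Qed.

Lemma sp_between (R : realType) (Rl : pref R) p c x :
  single_peaked Rl -> has_peak Rl p -> 0 <= c ->
  (c <= x <= p) \/ (p <= x <= c) -> Rl (Fin x) (Fin c).
Proof.
move=> [[Hcomp _] [_ [q [Hq Hmono]]]] Hp c0 H.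
have epq := peak_uniq Hp Hq; subst q.
have p0 : 0 <= p by have [] := (Hp (Fin p)).2 erefl.
have [->|hne] := eqVneq x c.
  by case: (Hcomp (Fin c) (Fin c)).
have x0 : 0 <= x by case: H => /andP[]; lra.
apply: (proj1 (Hmono x c x0 c0 _)).
case/orP: (lt_total hne) => h; case: H => /andP [h1 h2];
  first [by left; apply/andP; split; lra | by right; apply/andP; split; lra | lra].
Qed.

Theorem theorem1 (R : realType) (n : nat) (phi : rule_map R n) :
  is_rule phi -> simple_rule phi -> NOM phi.
Proof.
move=> Hrule [Hopo Hsimp] i Ri Ri' Om sRi sRi' Om0 [_ Hall].
have n0 : (0 < n)%N by apply: leq_ltn_trans (ltn_ord i).
have nR : n%:R != 0 :> R by rewrite pnatr_eq0 -lt0n.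
have c0 : 0 <= Om / n%:R by rewrite divr_ge0 // ?ltW // ler0n.
have hn : (Om / n%:R) *+ n = Om by rewrite -mulr_natr divfK.
have [p' [Hp' _]] := sRi'.2.2.
pose Rp := fun _ : 'I_n => Rc (Om / n%:R).
have Hopt : in_option_set phi i Ri' Om (Om / n%:R).
  exists Rp; split; first by move=> j _; exact: Rc_sp.
  have eco : economy (upd Rp i Ri') Om.
    split => // j; rewrite /upd; case: eqP => _; [exact: sRi'|exact: Rc_sp].
  pose pk j := if j == i then p' else Om / n%:R.
  have hpk : forall j, has_peak (upd Rp i Ri' j) (pk j).
    by move=> j; rewrite /upd /pk; case: eqP => _ //; exact: Rc_peak.
  have [nu [h1 [h2 [h3 [h4 h5]]]]] := Hsimp _ Om pk eco hpk.
  have exc : excess pk Om = p' - Om / n%:R.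
    rewrite /excess (eq_bigr (fun j => Om / n%:R + (if j == i then p' - Om / n%:R else 0))); last first.
      by move=> j _; rewrite /pk; case: eqP => _; rewrite ?addr0 //; ring.
    rewrite big_split /= sumr_const card_ord hn -big_mkcond big_pred1_eq; ring.
  have nsimp : forall j, ~~ simple_agent pk Om j.
    move=> j; rewrite /simple_agent exc /pk; case: eqP => _; apply/negP; case/orP => /andP[]; lra.
  have E0 : E_val pk Om = 0.
    rewrite /E_val big_pred0; last by move=> j; rewrite (negbTE (nsimp j)).
    rewrite (@eq_card _ _ predT); last by move=> j; rewrite !inE nsimp.
    by rewrite card_ord add0r mulr_natl hn subrr normr0.
  have nui : nu i = 0.
    apply: (psumr_eq0P (P := fun j => ~~ simple_agent pk Om j)) (nsimp i).
      by move=> j hj; case/andP: (h4 j hj).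
    by rewrite h5 E0.
  case: (lerP 0 (excess pk Om)) => he.
    by rewrite h2 // nui addr0.
  by rewrite h3 ?ltW // nui subr0.
have [x [[Rp0 [HRp0 ->]] [_ hnot]]] := Hall _ Hopt.
apply: hnot.
have eco : economy (upd Rp0 i Ri) Om.
  split => // j; rewrite /upd; case: eqP => hj; [exact: sRi|apply: HRp0; exact/eqP].
have hex : forall j, exists q, has_peak (upd Rp0 i Ri j) q.
  by move=> j; have [q [hq _]] := (eco.1 j).2.2; exists q.
pose pk j := proj1_sig (constructive_indefinite_description _ (hex j)).
have hpk : forall j, has_peak (upd Rp0 i Ri j) (pk j).
  by move=> j; exact: (proj2_sig (constructive_indefinite_description _ (hex j))).
have hpi : has_peak Ri (pk i) by have := hpk i; rewrite /upd eqxx.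
apply: (sp_between sRi hpi c0).
have [nu [h1 [h2 [h3 [h4 h5]]]]] := Hsimp _ Om pk eco hpk.
case hs: (simple_agent pk Om i).
  by rewrite h1 //; case: (lerP (Om / n%:R) (pk i)) => h; [left|right]; rewrite ?lexx ?h ?ltW.
have ns : ~~ simple_agent pk Om i by rewrite hs.
have /andP [nu0 nu1] := h4 i ns.
case: (lerP 0 (excess pk Om)) => he.
  have hc : Om / n%:R <= pk i.
    rewrite leNgt; apply: contra ns => h; by rewrite /simple_agent he h.
  rewrite h2 // ; left; rewrite ger0_norm ?subr_ge0 // in nu1; apply/andP; split; lra.
have hc : pk i <= Om / n%:R.
  rewrite leNgt; apply: contra ns => h; by rewrite /simple_agent (ltW he) h orbT.
rewrite (h3 (ltW he) i ns); right; rewrite ler0_norm ?subr_le0 // in nu1; apply/andP; split; lra.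
Qed.
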